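(* Let $\mathcal{S}$ be the stabilizer group of an $[[n,1,3]]$ stabilizer code on $n$ qubits. Let $g \in \mathcal{S}$ be a stabilizer generator of weight $w_g \ge 3$, written as $g = P_{a_1} P_{a_2} \cdots P_{a_{w_g}}$, where $a_1, \dots, a_{w_g}$ are the distinct qubits on which $g$ acts nontrivially, listed in the order in which the ancilla-controlled gates $\mathrm{C}\text{-}P_{a_1}, \dots, \mathrm{C}\text{-}P_{a_{w_g}}$ are applied during bare-ancilla syndrome extraction, and each $P_{a_i}\in\{X,Y,Z\}$ acts on qubit $a_i$. Consider a fault in a single ancilla–data gate $\mathrm{C}\text{-}P_{a_i}$ producing a two-qubit Pauli error on the ancilla and data qubit $a_i$; the resulting error on the data qubits is of the form $E_{i,Q} = Q_{a_i} \prod_{j > i} P_{a_j}$ with $Q \in \{X, Y, Z\}$ acting on qubit $a_i$. Let $$\mathcal{U}_g = \{E_{i,Q} : 1\le i\le w_g,\ Q\in\{X,Y,Z\},\ w(E_{i,Q}) > 1 \text{ and } w(E_{i,Q}\, s) > 1 \text{ for all } s \in \mathcal{S}\}.$$ Then $|\mathcal{U}_g| \le 3(w_g - 2)$.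
   Context: For a Pauli operator $E$ on $n$ qubits, $w(E)$ denotes its weight, i.e. the number of qubits on which $E$ acts nontrivially (global phases are ignored). Bare-ancilla syndrome extraction of $g$: a single ancilla is prepared in $|+\rangle$, the ancilla-controlled gates $\mathrm{C}\text{-}P_{a_1}, \dots, \mathrm{C}\text{-}P_{a_{w_g}}$ are applied in this order, and the ancilla is measured in the $X$ basis; an ancilla error occurring after gate $\mathrm{C}\text{-}P_{a_i}$ propagates to the data qubits as $\prod_{j>i}P_{a_j}$. Elements of $\mathcal{U}_g$ are called uncorrectable errors (errors not correctable by a distance-three code). *)

(* Defs.v *)
From mathcomp Require Import all_boot.
Set Implicit Arguments. Unset Strict Implicit. Unset Printing Implicit Defensive.

(* Single-qubit Paulis modulo phase, in binary symplectic form (x-bit, z-bit). *)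
Definition pauli := (bool * bool)%type.
Definition PI : pauli := (false, false).
Definition PX : pauli := (true, false).
Definition PZ : pauli := (false, true).
Definition PY : pauli := (true, true).

Definition pmul (p q : pauli) : pauli := (addb p.1 q.1, addb p.2 q.2).

Definition pauliop (n : nat) := {ffun 'I_n -> pauli}.

Definition opmul n (E F : pauliop n) : pauliop n := [ffun i => pmul (E i) (F i)].

Definition weight n (E : pauliop n) : nat := #|[set i | E i != PI]|.

Definition anticomm n (E F : pauliop n) : bool :=
  odd (\sum_(i < n) (((E i).1 && (F i).2) (+) ((E i).2 && (F i).1) : nat)).

Definition commute_op n (E F : pauliop n) : bool := ~~ anticomm E F.

Definition stabilizer_group n (S : {set pauliop n}) : Prop :=
  [/\ [ffun _ => PI] \in S,
      (forall E F, E \in S -> F \in S -> opmul E F \in S) &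
      (forall E F, E \in S -> F \in S -> commute_op E F)].

(* [[n,k,d]] stabilizer code: S has n-k independent generators (|S| = 2^(n-k)),
   and every logical operator (commutes with S, not in S) has weight >= d. *)
Definition stabilizer_code n k d (S : {set pauliop n}) : Prop :=
  [/\ stabilizer_group S, k <= n, #|S| = 2 ^ (n - k) &
      (forall E : pauliop n, (forall s, s \in S -> commute_op E s) ->
         E \notin S -> d <= weight E)].

Definition fault_error n (g : pauliop n) w (a : 'I_w -> 'I_n) (i : 'I_w) (Q : pauli)
  : pauliop n :=
  [ffun q => if q == a i then Q
             else if [exists j : 'I_w, (i < j) && (a j == q)] then g q else PI].

Definition uncorrectable n (S : {set pauliop n}) (g : pauliop n) w (a : 'I_w -> 'I_n)
  : {set pauliop n} :=
  [set E | [exists i : 'I_w, exists Q : pauli,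
              (Q != PI) && (E == fault_error g a i Q)]
           && (1 < weight E)
           && [forall s in S, 1 < weight (opmul E s)]].

(* Main.v *)
Require Import Defs.
From mathcomp Require Import all_boot.

Lemma weight_le1 n (E : pauliop n) q0 :
  (forall q, E q != PI -> q == q0) -> weight E <= 1.
Proof.
move=> H; rewrite /weight -(cards1 q0); apply: subset_leq_card.
by apply/subsetP => q; rewrite !inE => /H.
Qed.

Theorem lemma2 (n : nat) (S : {set pauliop n}) (g : pauliop n)
  (w : nat) (a : 'I_w -> 'I_n) :
  stabilizer_code 1 3 S ->
  g \in S ->
  w = weight g ->
  3 <= w ->
  injective a ->
  (forall q : 'I_n, (g q != PI) = [exists j : 'I_w, a j == q]) ->
  #|uncorrectable S g a| <= 3 * (w - 2).
Proof.
move=> _ gS wE w3 ainj hg.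
have h0 : 0 < w by apply: leq_trans w3.
have h1 : w.-1 < w by rewrite prednK.
pose i0 : 'I_w := Ordinal h0.
pose i1 : 'I_w := Ordinal h1.
pose M := [set: 'I_w] :\ i0 :\ i1.
have sub : uncorrectable S g a \subset
   [set fault_error g a p.1 p.2 | p in setX M [set~ PI]].
  apply/subsetP => E; rewrite inE => /andP[/andP[/existsP[i /existsP[Q /andP[QP /eqP EE]]] wt] /forallP all].
  apply/imsetP; exists (i, Q) => //.
  rewrite !inE /= QP andbT.
  apply/andP; split.
    apply/negP => /eqP ii1; move: wt; rewrite ltnNge => /negP; apply.
    apply: (@weight_le1 _ _ (a i)) => q; rewrite EE ffunE.
    have [//|nqa] := eqVneq q (a i).
    case: existsP => [[j /andP[ij _]] _|]; last by rewrite eqxx.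
    by move: ij; rewrite ii1 /= ltnNge -ltnS prednK // ltn_ord.
  rewrite andbT; apply/negP => /eqP ii0; move: (all g); rewrite gS /= ltnNge => /negP; apply.
  apply: (@weight_le1 _ _ (a i)) => q; rewrite EE !ffunE.
  have [//|nqa] := eqVneq q (a i).
  case: ifP => [_|/negbT nex].
    by case: (g q) => [[] []].
  move/existsPn: nex => nex.
  rewrite /pmul /=; case: (g q) (hg q) => [x y] /= -> /existsP[j /eqP ajq].
  move: (nex j); rewrite ajq eqxx andbT ii0 /= -leqNgt leqn0 => /eqP j0.
  have ji : j = i by apply: val_inj; rewrite ii0 /= j0.
  by move: nqa; rewrite -ajq ji eqxx.
apply: leq_trans (subset_leq_card sub) _.
apply: leq_trans (leq_imset_card _ _) _.
rewrite cardsX cardsC1 card_prod card_bool mulnC.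
have -> : #|M| = w - 2.
  have c0 := cardsD1 i0 [set: 'I_w]; rewrite inE cardsT card_ord in c0.
  have c1 := cardsD1 i1 ([set: 'I_w] :\ i0).
  have i1in : i1 \in [set: 'I_w] :\ i0.
    rewrite !inE andbT; apply/eqP => /(congr1 val) /=.
    by case: w w3 {h0 h1 M sub wE i0 i1 a ainj hg c0 c1} => [|[|[|w]]].
  rewrite i1in -/M in c1; rewrite c1 in c0.
  by rewrite [X in _ = X - 2]c0 !add1n subSS ?subn0 // ?subSS ?subn0.
by [].
Qed.
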